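(* Let $n,a,b,t\ge0$ be integers, $P=(0,n)$, and let $\mu\in L(\Delta_n;a,b)$ be a lattice path passing through the point $P+(-t,t)$. Then \[ \sum_{T\in\mathcal{TD}(\Delta_{n}/\mu)} q^{\|T\|} =\begin{bmatrix} n+t\\ n\end{bmatrix}_q. \]
   Context: $\Delta_n$ is the lattice path from $(0,0)$ to $(n,n)$ consisting of $n$ up steps $(0,1)$ followed by $n$ down steps $(1,0)$. For integers $a,b\ge0$, let $O=(0,0)$, $N=(n,n)$, $A=O+(-a,a)$, $B=N+(-b,b)$, and $L(\Delta_n;a,b)$ the set of lattice paths with steps $(0,1),(1,0)$ from $A$ to $B$ never going below $\Delta_n$. For $\mu\in L(\Delta_n;a,b)$, $\Delta_n/\mu$ is the region bounded by $\Delta_n$, $\mu$ and segments $OA$, $NB$. A Dyck tile is an edge-connected set of unit cells with no $2\times2$ block whose cell centers, joined by unit up/right moves, form a translated Dyck path (a path with up/right unit steps never going below its starting diagonal, ending on it); its length is the length of that path. A truncated Dyck tile is obtained from a Dyck tile of positive length by cutting its northeast and southwest cells along their diagonals of slope $-1$ and removing the northeast half of the northeast cell and the southwest half of the southwest cell; its half-length is half the length of the original Dyck tile. A truncated Dyck tiling of a region $R=\lambda/\mu$ is a set $T$ of truncated Dyck tiles with disjoint interiors contained in $R$ such that (i) for each $\eta\in T$, if $(\eta+(1,-1))\cap R$ has nonempty interior then another tile of $T$ contains $\eta+(1,-1)$, and (ii) no two tiles share a border segment of slope $-1$. $\mathcal{TD}(R)$ is their set; $\|T\|$ is the sum of half-lengths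 of its tiles. $\begin{bmatrix} m\\ k\end{bmatrix}_q=\frac{[m]_q!}{[k]_q![m-k]_q!}$ with $[m]_q=1+\dots+q^{m-1}$. *)

(* Defs.v *)
From HB Require Import structures.
From mathcomp Require Import all_boot all_order all_algebra.
From mathcomp Require Import fraction.
Set Implicit Arguments. Unset Strict Implicit. Unset Printing Implicit Defensive.
Import Order.TTheory GRing.Theory Num.Theory.

Local Open Scope ring_scope.

Definition point := (int * int)%type.

(* Rotated coordinates: h = x + y (position along the path),
   v = y - x (height in the Dyck-path picture). *)
Definition hcoord (p : point) : int := p.1 + p.2.
Definition vcoord (p : point) : int := p.2 - p.1.

(* A lattice path is a start point and a word of steps:
   true = up step (0,1), false = step (1,0).
   [pt p0 s i] is the point reached after the first i steps. *)
Definition pt (p0 : point) (s : seq bool) (i : nat) : point :=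
  (p0.1 + (count negb (take i s))%:Z, p0.2 + (count id (take i s))%:Z).

Definition Delta (n : nat) : seq bool := nseq n true ++ nseq n false.
Definition ptO : point := (0, 0).
Definition ptA (a : nat) : point := (- (a%:Z), a%:Z).
Definition ptB (n b : nat) : point := (n%:Z - b%:Z, n%:Z + b%:Z).

(* mu \in L(Delta_n; a, b): a path from A to B never going below Delta_n
   (below = smaller height v at the same position h; both paths start at h = 0). *)
Definition inL (n a b : nat) (mu : seq bool) : Prop :=
  pt (ptA a) mu (size mu) = ptB n b /\
  forall i : nat, (i <= size mu)%N ->
    vcoord (pt ptO (Delta n) i) <= vcoord (pt (ptA a) mu i).

Definition passes_through (p0 : point) (s : seq bool) (q : point) : Prop :=
  exists2 i : nat, (i <= size s)%N & pt p0 s i = q.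

(* The unit cell with lower-left corner c is cut along its
   diagonal of slope -1; (c, false) is its south-west half and (c, true)
   its north-east half.  All regions and tiles considered are unions of such
   half cells, so interiors / containment are described by sets of half cells. *)
Definition halfcell := (point * bool)%type.

(* A half cell of the cell c
   has a vertical (in the rotated picture) side at h = hcoord c + 1, from height
   vcoord c - 1 to vcoord c + 1, and lies in the strip [h-1,h] (SW half) or
   [h,h+1] (NE half).  It lies in the region bounded by Delta_n, mu, OA, NB
   iff its strip lies within 0 <= h <= 2n and that side lies between
   Delta_n and mu. *)
Definition in_region (n a : nat) (mu : seq bool) (hc : halfcell) : Prop :=
  let h := hcoord hc.1 + 1 in
  let v := vcoord hc.1 in
  (if hc.2 then (0 <= h) && (h < (2 * n)%:Z) else (1 <= h) && (h <= (2 * n)%:Z)) /\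
  vcoord (pt ptO (Delta n) `|h|%N) + 1 <= v /\
  v + 1 <= vcoord (pt (ptA a) mu `|h|%N).

Definition dyck_word (w : seq bool) : bool :=
  (count id w == count negb w) &&
  all (fun i => count negb (take i w) <= count id (take i w))%N (iota 0 (size w).+1).

(* A (truncated) Dyck tile: the cell of its south-west cell and the Dyck word
   formed by joining the cell centres.  Its cells are [tcell t i], i <= size t.2. *)
Definition tile := (point * seq bool)%type.
Definition tlen (t : tile) : nat := size t.2.
Definition tcell (t : tile) (i : nat) : point := pt t.1 t.2 i.

Definition valid_tile (t : tile) : bool := (0 < tlen t)%N && dyck_word t.2.

(* Half cells of the truncated tile: the NE half of the SW cell, both halves of
   the intermediate cells, the SW half of the NE cell. *)
Definition in_tile (t : tile) (hc : halfcell) : bool :=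
  has (fun i => (tcell t i == hc.1) && (if hc.2 then (i < tlen t)%N else (0 < i)%N))
      (iota 0 (tlen t).+1).

Definition shift_tile (t : tile) : tile := ((t.1.1 + 1, t.1.2 - 1), t.2).

(* the border segments of slope -1 of a truncated tile: the diagonals of its
   SW cell and of its NE cell (identified by the cell) *)
Definition diags (t : tile) : seq point := [:: tcell t 0; tcell t (tlen t)].

Definition half_length (t : tile) : nat := (tlen t)./2.

(* Truncated Dyck tilings of Delta_n / mu; a tiling (a finite set of tiles)
   is represented by a duplicate-free list of tiles. *)
Definition is_TD (n a : nat) (mu : seq bool) (T : seq tile) : Prop :=
  uniq T /\
  (forall t, t \in T -> valid_tile t) /\
  (forall t hc, t \in T -> in_tile t hc -> in_region n a mu hc) /\
  (forall t1 t2 hc, t1 \in T -> t2 \in T -> t1 != t2 ->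
      in_tile t1 hc -> in_tile t2 hc -> False) /\
  (forall t, t \in T ->
      (exists hc, in_tile (shift_tile t) hc /\ in_region n a mu hc) ->
      exists t', [/\ t' \in T, t' != t &
         forall hc, in_tile (shift_tile t) hc -> in_tile t' hc]) /\
  (forall t1 t2, t1 \in T -> t2 \in T -> t1 != t2 ->
      ~~ has (fun c => c \in diags t2) (diags t1)).

Definition tnorm (T : seq tile) : nat := (\sum_(t <- T) half_length t)%N.

Definition qint (m : nat) : {poly int} := \sum_(i < m) 'X^i.
Definition qfact (m : nat) : {poly int} := \prod_(i < m) qint i.+1.
Definition qbinom (m k : nat) : {fraction {poly int}} :=
  FracField.tofrac (qfact m) /
    (FracField.tofrac (qfact k) * FracField.tofrac (qfact (m - k))).

(* Main.v *)
Require Import Defs.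
From HB Require Import structures.
From mathcomp Require Import all_boot all_order all_algebra.
From mathcomp Require Import fraction zify ring.
From Stdlib Require Import Classical_Prop.
Import Order.TTheory GRing.Theory Num.Theory.
Local Open Scope ring_scope.
Set Implicit Arguments. Unset Strict Implicit.

Lemma cnt_size (s : seq bool) : (count negb s + count id s = size s)%N.
Proof. elim: s => //= x s IH; case: x => /=; lia. Qed.

Lemma hcoord_pt p w i : hcoord (pt p w i) = hcoord p + (minn i (size w))%:Z.
Proof. rewrite /hcoord /pt /= -size_take_min -cnt_size. lia. Qed.

Lemma vcoord_pt p w i : vcoord (pt p w i) =
  vcoord p + (count id (take i w))%:Z - (count negb (take i w))%:Z.
Proof. rewrite /vcoord /pt /=. lia. Qed.

Lemma pt_ext (p q : point) : hcoord p = hcoord q -> vcoord p = vcoord q -> p = q.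
Proof. case: p => x y; case: q => x' y'; rewrite /hcoord /vcoord /= => *. congr pair; lia. Qed.

Lemma pt0 p w : pt p w 0 = p.
Proof. by case: p => x y; rewrite /pt take0 /= !addr0. Qed.

Lemma pt_cons p x w i :
  pt p (x :: w) i.+1 = pt (p.1 + (~~ x : nat)%:Z, p.2 + (x : nat)%:Z) w i.
Proof. rewrite /pt /=; congr pair; case: x => /=; lia. Qed.

Lemma word_ext p w1 w2 : size w1 = size w2 ->
  (forall i, (i <= size w1)%N -> pt p w1 i = pt p w2 i) -> w1 = w2.
Proof.
elim: w1 p w2 => [|x w1 IH] p [|y w2] //= [Hs] H.
have H1 := H 1%N isT; rewrite !pt_cons !pt0 in H1.
case: H1 => _ Hxy.
have exy : x = y by clear H IH; case: x y Hxy => [] [] //=; lia.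
rewrite {}exy in H *; congr cons.
apply: (IH (p.1 + (~~ y : nat)%:Z, p.2 + (y : nat)%:Z) _ Hs) => i Hi.
by have := H i.+1 Hi; rewrite !pt_cons.
Qed.

Lemma tile_ext (t t' : tile) : tlen t = tlen t' ->
  (forall i, (i <= tlen t)%N -> tcell t i = tcell t' i) -> t = t'.
Proof.
case: t => p w; case: t' => p' w'; rewrite /tlen /tcell /= => Hs H.
have ep : p = p' by have := H 0%N isT; rewrite !pt0.
subst p'; congr pair; apply: (@word_ext p _ _ Hs) => i Hi; exact: H.
Qed.

Lemma in_tileP t hc : in_tile t hc <->
  exists i, [/\ (i <= tlen t)%N, tcell t i = hc.1 &
               (if hc.2 then (i < tlen t)%N else (0 < i)%N)].
Proof.
rewrite /in_tile; split.
  move/hasP => [i]; rewrite mem_iota add0n ltnS => Hi /andP [/eqP H1 H2].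
  by exists i.
move=> [i [Hi H1 H2]]; apply/hasP; exists i.
  by rewrite mem_iota add0n ltnS.
by rewrite H1 eqxx.
Qed.

Lemma take_nseqm m j (x : bool) : take m (nseq j x) = nseq (minn m j) x.
Proof.
case: (leqP m j) => H.
  by rewrite take_nseq // (minn_idPl H).
by rewrite take_oversize ?size_nseq ?(ltnW H) // (minn_idPr (ltnW H)).
Qed.

Lemma take_cnt (i j : nat) :
  count id (take i (nseq j true ++ nseq j false)) = minn i j /\
  count negb (take i (nseq j true ++ nseq j false)) = minn (i - j) j.
Proof.
rewrite take_cat size_nseq; case: ltnP => H.
  rewrite take_nseqm !count_nseq /=; split; lia.
rewrite take_nseqm !count_cat !count_nseq /=; split; lia.
Qed.

Definition Dz (n : nat) (h : int) : int := if h <= n%:Z then h else n%:Z + n%:Z - h.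

Lemma Delta_v n (h : int) : 0 <= h -> h <= n%:Z + n%:Z ->
  vcoord (pt ptO (Delta n) `|h|%N) = Dz n h.
Proof.
move=> h0 h1; rewrite vcoord_pt /Delta.
have [c1 c2] := take_cnt `|h|%N n.
rewrite c1 c2 /Dz /vcoord /ptO /=.
case: ifP; lia.
Qed.

Definition ptile (n : nat) (k : int) (j : nat) : tile :=
  ((- k, n%:Z - j%:Z + k - 1), nseq j true ++ nseq j false).

Lemma ptile_len n k j : tlen (ptile n k j) = (j + j)%N.
Proof. by rewrite /tlen /= size_cat !size_nseq. Qed.

Lemma ptile_cell n k j i : (j <= n)%N -> (i <= j + j)%N ->
  hcoord (tcell (ptile n k j) i) + 1 = n%:Z - j%:Z + i%:Z /\
  vcoord (tcell (ptile n k j) i) = Dz n (n%:Z - j%:Z + i%:Z) + 2 * k - 1.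
Proof.
move=> Hj Hi; rewrite /tcell hcoord_pt vcoord_pt.
have [c1 c2] := take_cnt i j.
rewrite c1 c2 /= size_cat !size_nseq /Dz /hcoord /vcoord /=.
case: ifP; lia.
Qed.

Lemma lip p w i j : (i <= j)%N ->
  vcoord (pt p w j) - vcoord (pt p w i) <= (j - i)%N%:Z /\
  - ((j - i)%N%:Z) <= vcoord (pt p w j) - vcoord (pt p w i).
Proof.
move=> Hij; rewrite !vcoord_pt -(subnKC Hij) takeD !count_cat.
have := cnt_size (take (j - i) (drop i w)); rewrite size_take_min => Hs.
have Hm : (minn (j - i) (size (drop i w)) <= j - i)%N by apply: geq_minl.
rewrite (subnKC Hij). split; lia.
Qed.

Lemma mu_size n a b mu : inL n a b mu -> size mu = (n + n)%N.
Proof.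
move=> [He _]; have := congr1 hcoord He.
rewrite hcoord_pt minnn /hcoord /ptA /ptB /=. lia.
Qed.

Lemma mu_n n a b t mu : inL n a b mu ->
  passes_through (ptA a) mu (- (t%:Z), n%:Z + t%:Z) ->
  vcoord (pt (ptA a) mu n) = n%:Z + 2 * t%:Z.
Proof.
move=> HL [i Hi He]; have Hs := mu_size HL.
have Hin : i = n.
  have := congr1 hcoord He; rewrite hcoord_pt (minn_idPl Hi) /hcoord /ptA /=; lia.
subst i; rewrite He /vcoord /=; lia.
Qed.

Lemma mu_bound n a b t mu : inL n a b mu ->
  passes_through (ptA a) mu (- (t%:Z), n%:Z + t%:Z) ->
  forall h : int, 0 <= h -> h <= n%:Z + n%:Z ->
    Dz n h + 2 * t%:Z <= vcoord (pt (ptA a) mu `|h|%N).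
Proof.
move=> HL HP h h0 h1; have Hn := mu_n HL HP.
rewrite /Dz; case: ifP => Hh.
  have Hle : (`|h| <= n)%N by lia.
  have [L1 L2] := lip (ptA a) mu Hle. lia.
have Hle : (n <= `|h|)%N by lia.
have [L1 L2] := lip (ptA a) mu Hle. lia.
Qed.

Lemma Dz_ge0 n h : 0 <= h -> h <= n%:Z + n%:Z -> 0 <= Dz n h.
Proof. rewrite /Dz; case: ifP; lia. Qed.

Lemma in_region_facts n a mu c b : in_region n a mu (c, b) ->
  [/\ (0 <= hcoord c + 1)%R, (hcoord c + 1 <= n%:Z + n%:Z)%R,
      (Dz n (hcoord c + 1) + 1 <= vcoord c)%R &
      (vcoord c + 1 <= vcoord (pt (ptA a) mu `|(hcoord c + 1)%R|%N))%R].
Proof.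
rewrite /in_region /= => [[H1 [H2 H3]]].
have [h0 h1] : 0 <= hcoord c + 1 /\ hcoord c + 1 <= n%:Z + n%:Z.
  by move: H1; case: b => /andP [] ; lia.
by rewrite -Delta_v.
Qed.

Lemma in_region_strip n a mu c b : in_region n a mu (c, b) ->
  (if b then (0 <= hcoord c + 1) && (hcoord c + 1 < (2 * n)%N%:Z)
   else (1 <= hcoord c + 1) && (hcoord c + 1 <= (2 * n)%N%:Z)).
Proof. by rewrite /in_region /= => [[H1 _]]. Qed.

Lemma in_region_intro n a mu c b :
  (if b then (0 <= hcoord c + 1) && (hcoord c + 1 < (2 * n)%N%:Z)
   else (1 <= hcoord c + 1) && (hcoord c + 1 <= (2 * n)%N%:Z)) ->
  Dz n (hcoord c + 1) + 1 <= vcoord c ->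
  vcoord c + 1 <= vcoord (pt (ptA a) mu `|(hcoord c + 1)%R|%N) ->
  in_region n a mu (c, b).
Proof.
move=> H1 H2 H3.
have [h0 h1] : 0 <= hcoord c + 1 /\ hcoord c + 1 <= n%:Z + n%:Z.
  by move: H1; case: b => /andP [] ; lia.
rewrite /in_region /= Delta_v //; split=> //.
Qed.

Lemma in_region_move n a mu c c' b : in_region n a mu (c, b) ->
  hcoord c' = hcoord c -> Dz n (hcoord c + 1) + 1 <= vcoord c' -> vcoord c' <= vcoord c ->
  in_region n a mu (c', b).
Proof.
move=> HR Eh H1 H2; have S := in_region_strip HR.
have [_ _ _ H4] := in_region_facts HR.
apply: in_region_intro; rewrite Eh //; lia.
Qed.

Lemma ptile_inj n k1 j1 k2 j2 : ptile n k1 j1 = ptile n k2 j2 -> k1 = k2 /\ j1 = j2.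
Proof.
move=> E; have E1 := congr1 (fun t : tile => t.1.1) E.
have E2 := congr1 (fun t : tile => size t.2) E.
move: E1 E2; rewrite /= !size_cat !size_nseq => E1 E2; split; lia.
Qed.

Lemma ptile_peak n k j : (1 <= j <= n)%N ->
  in_tile (ptile n k j) ((- k, n%:Z + k - 1), true).
Proof.
move=> /andP [j1 jn]; apply/in_tileP; exists j; rewrite ptile_len; split=> //.
- by rewrite leq_addl.
- have [H1 H2] := ptile_cell k jn (leq_addl j j).
  apply: pt_ext; move: H1 H2; rewrite /hcoord /vcoord /Dz /=; case: ifP; lia.
- rewrite /=; lia.
Qed.

Lemma cell_level n k1 j1 i1 k2 j2 i2 : (j1 <= n)%N -> (i1 <= j1 + j1)%N ->
  (j2 <= n)%N -> (i2 <= j2 + j2)%N ->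
  tcell (ptile n k1 j1) i1 = tcell (ptile n k2 j2) i2 ->
  k1 = k2 /\ (j2%:Z - j1%:Z = i2%:Z - i1%:Z).
Proof.
move=> a1 b1 a2 b2 E.
have [H1 H2] := ptile_cell k1 a1 b1; have [H3 H4] := ptile_cell k2 a2 b2.
rewrite E in H1 H2. rewrite H1 in H3.
have Eh : n%:Z - j1%:Z + i1%:Z = n%:Z - j2%:Z + i2%:Z by lia.
rewrite H2 Eh in H4; split; lia.
Qed.

Lemma shift_cell t i : hcoord (tcell (shift_tile t) i) = hcoord (tcell t i) /\
  vcoord (tcell (shift_tile t) i) = vcoord (tcell t i) - 2.
Proof.
rewrite /tcell !hcoord_pt !vcoord_pt /shift_tile /hcoord /vcoord /=; split; lia.
Qed.

Lemma shift_ptile n (k : int) j : shift_tile (ptile n k j) = ptile n (k - 1) j.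
Proof. rewrite /shift_tile /ptile /=; congr pair; congr pair; lia. Qed.

Lemma dyck_prefix w i : dyck_word w -> (i <= size w)%N ->
  (count negb (take i w) <= count id (take i w))%N.
Proof.
move=> /andP [_ /allP H] Hi; apply: H; rewrite mem_iota add0n ltnS //.
Qed.

Lemma dyck_end w : dyck_word w -> count id w = count negb w.
Proof. by move=> /andP [/eqP H _]. Qed.

Lemma tcell_v_ge t i : valid_tile t -> (i <= tlen t)%N ->
  vcoord t.1 <= vcoord (tcell t i).
Proof.
move=> /andP [_ D] Hi; rewrite /tcell vcoord_pt.
have := dyck_prefix D Hi; lia.
Qed.

Lemma tcell_h t i : (i <= tlen t)%N -> hcoord (tcell t i) = hcoord t.1 + i%:Z.
Proof. by move=> Hi; rewrite /tcell hcoord_pt (minn_idPl Hi). Qed.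

Lemma parallel n (k : int) (t : tile) : valid_tile t ->
  0 <= hcoord t.1 + 1 -> hcoord t.1 + 1 + (tlen t)%:Z <= n%:Z + n%:Z ->
  (forall i, (i <= tlen t)%N ->
     vcoord (tcell t i) = Dz n (hcoord (tcell t i) + 1) + 2 * k - 1) ->
  exists j, (1 <= j <= n)%N /\ t = ptile n k j.
Proof.
move=> V s0 sL H.
have L0 : (0 < tlen t)%N by case/andP: V.
have E0 := H 0%N isT; have EL := H (tlen t) (leqnn _).
rewrite /tcell pt0 in E0.
have HvL : vcoord (tcell t (tlen t)) = vcoord t.1.
  rewrite /tcell vcoord_pt take_size; case/andP: V => _ /dyck_end ->; lia.
rewrite HvL tcell_h // in EL.
have key : (hcoord t.1 + 1) + (hcoord t.1 + 1) + (tlen t)%:Z = n%:Z + n%:Z.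
  move: E0 EL; rewrite /Dz; case: ifP; case: ifP; lia.
exists (n - `|(hcoord t.1 + 1)%R|%N)%N; split; first by apply/andP; split; lia.
have Hj : ((n - `|(hcoord t.1 + 1)%R|) <= n)%N by apply: leq_subr.
apply: tile_ext; first by rewrite ptile_len; lia.
move=> i Hi.
have Hi' : (i <= (n - `|(hcoord t.1 + 1)%R|) + (n - `|(hcoord t.1 + 1)%R|))%N by lia.
have [C1 C2] := ptile_cell k Hj Hi'.
apply: pt_ext.
  rewrite tcell_h //; lia.
rewrite H // C2 tcell_h //; congr (Dz n _ + _ - _); lia.
Qed.

Lemma ptile_valid n k j : (0 < j)%N -> valid_tile (ptile n k j).
Proof.
move=> j0; apply/andP; split; first by rewrite ptile_len; lia.
apply/andP; split.
  by rewrite /= !count_cat !count_nseq /=; apply/eqP; lia.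
apply/allP => i _; have [c1 c2] := take_cnt i j; rewrite /= c1 c2; lia.
Qed.

Lemma ptile_region n a mu (t : nat) (k j : nat) :
  (forall h : int, 0 <= h -> h <= n%:Z + n%:Z ->
    Dz n h + 2 * t%:Z <= vcoord (pt (ptA a) mu `|h|%N)) ->
  (1 <= k <= t)%N -> (1 <= j <= n)%N ->
  forall hc, in_tile (ptile n k j) hc -> in_region n a mu hc.
Proof.
move=> MB /andP [k1 kt] /andP [j1 jn] [c b] /in_tileP [i [Hi /= E Hb]].
rewrite ptile_len in Hi Hb.
have [C1 C2] := ptile_cell k jn Hi; rewrite E in C1 C2.
apply: in_region_intro.
- rewrite C1; move: Hb; case: b => Hb; apply/andP; split; lia.
- rewrite C2 C1; lia.
- rewrite C1 C2; have := MB (n%:Z - j%:Z + i%:Z); lia.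
Qed.

Lemma parity n (c : point) : Dz n (hcoord c + 1) + 1 <= vcoord c ->
  vcoord c < Dz n (hcoord c + 1) + 3 -> vcoord c = Dz n (hcoord c + 1) + 1.
Proof. case: c => x y; rewrite /Dz /hcoord /vcoord /=; case: ifP; lia. Qed.

Lemma char n a mu T : is_TD n a mu T -> forall t : tile, t \in T ->
  exists k j : nat, [/\ (1 <= k)%N, (1 <= j <= n)%N & t = ptile n k%:Z j].
Proof.
move=> [U [V [C [D [S I]]]]].
have cellR : forall t : tile, t \in T -> forall i, (i <= tlen t)%N ->
    in_region n a mu (tcell t i, (i < tlen t)%N).
  move=> t Ht i Hi; apply: (C t) => //; apply/in_tileP; exists i; split=> //=.
  case: ltnP => // h; have := V t Ht; case/andP => L0 _; lia.
have sbounds : forall t : tile, t \in T ->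
    0 <= hcoord t.1 + 1 /\ hcoord t.1 + 1 + (tlen t)%:Z <= n%:Z + n%:Z.
  move=> t Ht; have [a1 _ _ _] := in_region_facts (cellR t Ht 0%N isT).
  have [_ a2 _ _] := in_region_facts (cellR t Ht (tlen t) (leqnn _)).
  rewrite /tcell pt0 in a1; rewrite tcell_h // in a2; split=> //; by rewrite addrAC.
suff H : forall N : nat, forall t : tile, t \in T -> vcoord t.1 < N%:Z ->
    exists k j : nat, [/\ (1 <= k)%N, (1 <= j <= n)%N & t = ptile n k%:Z j].
  by move=> t Ht; apply: (H (`|vcoord t.1|.+1)%N) => //; lia.
elim=> [|N IH] t Ht Hv.
  have [a1 a2 a3 _] := in_region_facts (cellR t Ht 0%N isT).
  rewrite /tcell pt0 in a1 a2 a3; have := Dz_ge0 a1 a2; lia.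
have [s0 sL] := sbounds t Ht.
case: (classic (exists hc, in_tile (shift_tile t) hc /\ in_region n a mu hc)) => Hex.
  have [t' [Ht' Hne Hsub]] := S t Ht Hex.
  have Hs0 : in_tile t' (tcell (shift_tile t) 0, true).
    apply: Hsub; apply/in_tileP; exists 0%N; split=> //=.
    by have := V t Ht; case/andP.
  move/in_tileP: Hs0 => [i' [Hi' E' _]].
  have Hv' := tcell_v_ge (V t' Ht') Hi'; rewrite E' /= in Hv'.
  have [_ sv] := shift_cell t 0; rewrite /tcell !pt0 in sv; rewrite /tcell !pt0 in Hv'.
  have [k' [j' [k1 j1 Et']]] := IH t' Ht' ltac:(rewrite sv in Hv'; lia).
  have := @parallel n (k'.+1)%:Z t (V t Ht) s0 sL.
  case.
    move=> i Hi.
    have Hsi : in_tile t' (tcell (shift_tile t) i, (i < tlen t)%N).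
      apply: Hsub; apply/in_tileP; exists i; split=> //=.
      case: ltnP => // h; have := V t Ht; case/andP => L0 _; lia.
    move/in_tileP: Hsi => [i'' [Hi'' E'' _]].
    rewrite Et' ptile_len in Hi''; rewrite Et' /= in E''.
    case/andP: j1 => _ jn.
    have [C1 C2] := ptile_cell k' jn Hi''.
    have [sh sv2] := shift_cell t i.
    rewrite E'' sh in C1; rewrite E'' sv2 in C2.
    rewrite -C1 in C2; lia.
  move=> j [Hj ->]; exists k'.+1, j; split=> //.
have Hpar := @parallel n 1 t (V t Ht) s0 sL.
case: Hpar.
  move=> i Hi; have R := cellR t Ht i Hi.
  have [f0 f1 f2 f3] := in_region_facts R.
  have [sh sv] := shift_cell t i.
  have Hn : ~ (Dz n (hcoord (tcell t i) + 1) + 1 <= vcoord (tcell t i) - 2).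
    move=> HH; apply: Hex; exists (tcell (shift_tile t) i, (i < tlen t)%N); split.
      apply/in_tileP; exists i; split=> //=.
      case: ltnP => // h; have := V t Ht; case/andP => L0 _; lia.
    apply: (in_region_move R) => //; lia.
  have := parity f2; lia.
move=> j [Hj ->]; exists 1%N, j; split=> //.
Qed.

Fixpoint mkT (n k : nat) (p : seq nat) : seq tile :=
  if p is j :: p' then ptile n k%:Z j :: mkT n k.+1 p' else [::].

Lemma mem_mkT n k p (t : tile) : t \in mkT n k p <->
  exists2 i, (i < size p)%N & t = ptile n (k + i)%N%:Z (nth 0%N p i).
Proof.
elim: p k => [|j p IH] k /=; first by split=> // [[i]].
rewrite in_cons; split.
  case/orP => [/eqP ->|H]; first by exists 0%N; rewrite ?addn0.
  have [i Hi ->] := (IH k.+1).1 H.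
  by exists i.+1 => //; rewrite addnS.
move=> [[|i] Hi Et]; first by rewrite Et addn0 eqxx.
apply/orP; right; apply: (proj2 (IH k.+1)); exists i => //; by rewrite Et addnS.
Qed.

Lemma size_mkT n k p : size (mkT n k p) = size p.
Proof. by elim: p k => //= j p IH k; rewrite IH. Qed.

Lemma uniq_mkT n k p : uniq (mkT n k p).
Proof.
elim: p k => //= j p IH k; rewrite IH andbT; apply/negP => /mem_mkT [i _ E].
have [E1 _] := ptile_inj E; lia.
Qed.

Lemma tnorm_mkT n k p : tnorm (mkT n k p) = sumn p.
Proof.
elim: p k => [|j p IH] k; first by rewrite /tnorm big_nil.
rewrite /= /tnorm big_cons -/(tnorm _) IH /half_length ptile_len addnn doubleK //.
Qed.

Fixpoint goodp (b : nat) (p : seq nat) : bool :=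
  if p is x :: p' then (0 < x <= b)%N && goodp x p' else true.

Lemma goodp_bound b p : goodp b p -> forall i, (i < size p)%N -> (0 < nth 0 p i <= b)%N.
Proof.
elim: p b => [|x p IH] b //= /andP [/andP [x0 xb] G] [|i] //= Hi.
have := IH x G i Hi; case/andP => -> /= H; exact: leq_trans H xb.
Qed.

Lemma goodp_mono b p : goodp b p -> forall i, (i.+1 < size p)%N -> (nth 0 p i.+1 <= nth 0 p i)%N.
Proof.
elim: p b => [|x p IH] b //= /andP [_ G] [|i] /= Hi.
  by have := goodp_bound G (i:=0) Hi; case/andP.
exact: IH G i Hi.
Qed.

Lemma goodp_intro b p : (forall i, (i < size p)%N -> (0 < nth 0 p i)%N) ->
  ((0 < size p)%N -> (nth 0 p 0 <= b)%N) ->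
  (forall i, (i.+1 < size p)%N -> (nth 0 p i.+1 <= nth 0 p i)%N) -> goodp b p.
Proof.
elim: p b => [|x p IH] b //= H0 Hb Hm.
rewrite (H0 0%N isT) (Hb isT) /=; apply: IH.
- by move=> i Hi; apply: (H0 i.+1).
- by move=> Hs; apply: (Hm 0%N).
- by move=> i Hi; apply: (Hm i.+1).
Qed.

Lemma ptile_sub n k j j' hc : (j <= j')%N -> (j' <= n)%N ->
  in_tile (ptile n k j) hc -> in_tile (ptile n k j') hc.
Proof.
move=> jj jn /in_tileP [i [Hi E Hb]]; rewrite ptile_len in Hi Hb.
apply/in_tileP; exists (i + (j' - j))%N; rewrite ptile_len; split.
- lia.
- rewrite -E; have jn' : (j <= n)%N by apply: leq_trans jn.
  have [A1 A2] := ptile_cell k jn' Hi.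
  have Hi' : (i + (j' - j) <= j' + j')%N by lia.
  have [B1 B2] := ptile_cell k jn Hi'.
  apply: pt_ext; first lia.
  rewrite A2 B2; congr (Dz n _ + _ - _); lia.
- by case: (hc.2) Hb => /=; lia.
Qed.

Lemma mkT_TD n a mu (t : nat) p :
  (forall h : int, 0 <= h -> h <= n%:Z + n%:Z ->
    Dz n h + 2 * t%:Z <= vcoord (pt (ptA a) mu `|h|%N)) ->
  (size p <= t)%N -> goodp n p -> is_TD n a mu (mkT n 1 p).
Proof.
move=> MB Hs G.
have GB := goodp_bound G; have GM := goodp_mono G.
split; first exact: uniq_mkT.
split.
  by move=> t0 /mem_mkT [i Hi ->]; apply: ptile_valid; case/andP: (GB i Hi).
split.
  move=> t0 hc /mem_mkT [i Hi ->] Hin; apply: (ptile_region MB _ _ Hin).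
  - by apply/andP; split; lia.
  - exact: GB.
split.
  move=> t1 t2 hc /mem_mkT [i1 Hi1 ->] /mem_mkT [i2 Hi2 ->] Hne.
  move=> /in_tileP [l1 [L1 E1 _]] /in_tileP [l2 [L2 E2 _]].
  rewrite ptile_len in L1; rewrite ptile_len in L2.
  have /andP [_ n1] := GB i1 Hi1; have /andP [_ n2] := GB i2 Hi2.
  have [Ek _] := cell_level n1 L1 n2 L2 (etrans E1 (esym E2)).
  have ei : i1 = i2 by lia.
  by move: Hne; rewrite ei eqxx.
split.
  move=> t0 /mem_mkT [[|i] Hi ->].
    move=> [hc [Hin Hr]]; rewrite shift_ptile in Hin.
    move/in_tileP: Hin => [l [L E _]]; rewrite ptile_len in L.
    have /andP [_ n1] := GB 0%N Hi.
    have [C1 C2] := ptile_cell ((1 + 0)%N%:Z - 1) n1 L.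
    case: hc E Hr => c b /= E Hr; have [f0 f1 f2 _] := in_region_facts Hr.
    rewrite -E C1 C2 in f2; lia.
  move=> _; exists (ptile n (1 + i)%N%:Z (nth 0%N p i)); split.
  - by apply/mem_mkT; exists i => //; lia.
  - by apply/negP => /eqP /ptile_inj [H _]; lia.
  move=> hc; rewrite shift_ptile.
  have -> : ((1 + i.+1)%N%:Z - 1) = (1 + i)%N%:Z by lia.
  apply: ptile_sub; first exact: GM.
  by have := GB i (ltnW Hi); case/andP.
move=> t1 t2 /mem_mkT [i1 Hi1 ->] /mem_mkT [i2 Hi2 ->] Hne.
apply/hasP => [[c Hc1 Hc2]].
have /andP [_ n1] := GB i1 Hi1; have /andP [_ n2] := GB i2 Hi2.
suff ei : i1 = i2 by move: Hne; rewrite ei eqxx.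
move: Hc1 Hc2; rewrite /diags !ptile_len !inE.
have z1 : (0 <= nth 0 p i1 + nth 0 p i1)%N by [].
have z2 : (0 <= nth 0 p i2 + nth 0 p i2)%N by [].
move=> /orP [] /eqP -> /orP [] /eqP E.
- by have [Ek _] := cell_level n1 z1 n2 z2 E; lia.
- by have [Ek _] := cell_level n1 z1 n2 (leqnn _) E; lia.
- by have [Ek _] := cell_level n1 (leqnn _) n2 z2 E; lia.
- by have [Ek _] := cell_level n1 (leqnn _) n2 (leqnn _) E; lia.
Qed.

Lemma levels_perm (L : seq nat) : uniq L -> (forall x, x \in L -> (0 < x)%N) ->
  (forall x, x \in L -> (1 < x)%N -> x.-1 \in L) -> perm_eq L (iota 1 (size L)).
Proof.
move=> U P D.
have down : forall e x, x \in L -> (e < x)%N -> (x - e)%N \in L.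
  elim=> [|e IH] x Hx He; first by rewrite subn0.
  have H1 := IH x Hx (ltnW He).
  have -> : (x - e.+1)%N = (x - e)%N.-1 by lia.
  by apply: D H1 _; lia.
have bound : forall x, x \in L -> (x <= size L)%N.
  move=> x Hx; rewrite -[X in (X <= _)%N](size_iota 1 x).
  apply: uniq_leq_size; first exact: iota_uniq.
  move=> y; rewrite mem_iota => Hy.
  have -> : y = (x - (x - y))%N by lia.
  apply: down => //; lia.
have sub : {subset L <= iota 1 (size L)}.
  move=> x Hx; rewrite mem_iota; have := P x Hx; have := bound x Hx; lia.
have [_ E] := uniq_min_size U sub ltac:(by rewrite size_iota).
exact: uniq_perm U (iota_uniq _ _) E.
Qed.

Lemma TD_same_level n a mu T (k : int) j1 j2 : is_TD n a mu T ->
  ptile n k j1 \in T -> ptile n k j2 \in T -> (1 <= j1 <= n)%N -> (1 <= j2 <= n)%N ->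
  ptile n k j1 = ptile n k j2.
Proof.
move=> [_ [_ [_ [D _]]]] H1 H2 J1 J2.
case: (eqVneq (ptile n k j1) (ptile n k j2)) => // Hne.
by case: (D _ _ _ H1 H2 Hne (ptile_peak k J1) (ptile_peak k J2)).
Qed.

Lemma TD_level_bound n a b t mu T (k : int) j : inL n a b mu ->
  passes_through (ptA a) mu (- (t%:Z), n%:Z + t%:Z) -> is_TD n a mu T ->
  ptile n k j \in T -> (1 <= j <= n)%N -> k <= t%:Z.
Proof.
move=> HL HP [_ [_ [C _]]] Ht J.
have R := C _ _ Ht (ptile_peak k J).
have [_ _ _ f3] := in_region_facts R.
have E : `|(hcoord (- k, n%:Z + k - 1) + 1)%R|%N = n by rewrite /hcoord /=; lia.
rewrite E (mu_n HL HP) /vcoord /= in f3; lia.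
Qed.

Lemma TD_down n a mu T (k : int) j : is_TD n a mu T ->
  ptile n k j \in T -> (1 <= j <= n)%N -> 2 <= k ->
  exists j', (j <= j' <= n)%N /\ ptile n (k - 1) j' \in T.
Proof.
move=> HT Ht J k2; have HT' := HT.
move: HT => [_ [_ [C [_ [S _]]]]].
have /andP [j1 jn] := J.
have z : (0 <= j + j)%N by [].
have I0 : in_tile (ptile n k j) (tcell (ptile n k j) 0, true).
  by apply/in_tileP; exists 0%N; rewrite ptile_len; split=> //=; lia.
have R0 := C _ _ Ht I0.
have [A1 A2] := ptile_cell k jn z.
have [B1 B2] := ptile_cell (k - 1) jn z.
have R1 : in_region n a mu (tcell (ptile n (k - 1) j) 0, true).
  apply: (in_region_move R0); [lia | rewrite A1 B2; lia | lia].
have I1 : in_tile (ptile n (k - 1) j) (tcell (ptile n (k - 1) j) 0, true).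
  by apply/in_tileP; exists 0%N; rewrite ptile_len; split=> //=; lia.
have [t' [Ht' _ Hsub]] : exists t', [/\ t' \in T, t' != ptile n k j &
    forall hc, in_tile (shift_tile (ptile n k j)) hc -> in_tile t' hc].
  apply: S => //; exists (tcell (ptile n (k - 1) j) 0, true); split=> //.
  by rewrite shift_ptile.
have := Hsub _ ltac:(rewrite shift_ptile; exact: I1).
have [k' [j' [k1 J' Et']]] := char HT' Ht'.
rewrite Et' => /in_tileP [i [Hi E _]]; rewrite ptile_len in Hi.
have /andP [_ jn'] := J'.
have [Ek Ej] := cell_level jn' Hi jn z E.
exists j'; split; first by apply/andP; split=> //; lia.
by rewrite -Ek -Et'.
Qed.

Definition lev (x : tile) : nat := `|- x.1.1|%N.
Definition jj (x : tile) : nat := (tlen x)./2.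

Lemma lev_ptile n (k : nat) j : lev (ptile n k%:Z j) = k.
Proof. rewrite /lev /=; lia. Qed.

Lemma TD_part n a b t mu T : inL n a b mu ->
  passes_through (ptA a) mu (- (t%:Z), n%:Z + t%:Z) -> is_TD n a mu T ->
  exists p, [/\ (size p <= t)%N, goodp n p & perm_eq T (mkT n 1 p)].
Proof.
move=> HL HP HT.
have Hform : forall x, x \in T ->
    [/\ x = ptile n (lev x)%:Z (jj x), (1 <= lev x)%N & (1 <= jj x <= n)%N].
  move=> x Hx; have [k [j [k1 J ->]]] := char HT Hx.
  by rewrite lev_ptile /jj ptile_len addnn doubleK.
have Hinj : {in T &, injective lev}.
  move=> x y Hx Hy E; have [ex _ jx] := Hform x Hx; have [ey _ jy] := Hform y Hy.
  have Hx' : ptile n (lev x)%:Z (jj x) \in T by rewrite -ex.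
  have Hy' : ptile n (lev x)%:Z (jj y) \in T by rewrite E -ey.
  apply: (etrans ex); apply: (etrans _ (esym ey)); rewrite -E.
  exact: TD_same_level HT Hx' Hy' jx jy.
have LP : perm_eq (map lev T) (iota 1 (size (map lev T))).
  apply: levels_perm.
  - by rewrite map_inj_in_uniq //; case: HT.
  - by move=> x /mapP [y Hy ->]; have [_ ? _] := Hform y Hy.
  - move=> x /mapP [y Hy ->] H2; have [ey ly jy] := Hform y Hy.
    have Hy' : ptile n (lev y)%:Z (jj y) \in T by rewrite -ey.
    have [j' [J' Hin]] := TD_down HT Hy' jy ltac:(lia).
    have E : (lev y)%:Z - 1 = ((lev y).-1)%N%:Z by lia.
    rewrite E in Hin.
    apply/mapP; exists (ptile n ((lev y).-1)%:Z j') => //.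
    by rewrite lev_ptile.
rewrite size_map in LP.
set m := size T.
have memL : forall k, (k \in map lev T) = (1 <= k <= m)%N.
  by move=> k; rewrite (perm_mem LP) mem_iota add1n ltnS.
set t0 := ptile n 0 0.
pose Tk k := nth t0 T (index k (map lev T)).
have TkP : forall k, (1 <= k <= m)%N -> Tk k \in T /\ lev (Tk k) = k.
  move=> k Hk; have kL : k \in map lev T by rewrite memL.
  have Hi : (index k (map lev T) < size T)%N.
    by rewrite -(size_map lev) index_mem.
  split; first exact: mem_nth.
  by rewrite /Tk -(nth_map t0 0%N) // nth_index.
have TkU : forall x, x \in T -> Tk (lev x) = x.
  move=> x Hx; have xL : lev x \in map lev T by apply: map_f.
  have Hk : (1 <= lev x <= m)%N by rewrite -memL.
  have [H1 H2] := TkP _ Hk; exact: Hinj H1 Hx H2.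
pose p := [seq jj (Tk k.+1) | k <- iota 0 m].
have pnth : forall i, (i < m)%N -> nth 0%N p i = jj (Tk i.+1).
  by move=> i Hi; rewrite (nth_map 0%N) ?size_iota // nth_iota.
have sp : size p = m by rewrite size_map size_iota.
exists p; split.
- rewrite sp; case: (posnP m) => [->//|m0].
  have [H1 H2] := TkP m ltac:(lia).
  have [e _ J] := Hform _ H1.
  have Hin : ptile n m%:Z (jj (Tk m)) \in T by rewrite -{1}H2 -e.
  have := TD_level_bound HL HP HT Hin J; lia.
- apply: goodp_intro; rewrite sp.
  + move=> i Hi; rewrite pnth //; have [H1 _] := TkP i.+1 ltac:(lia).
    by have [_ _ /andP []] := Hform _ H1.
  + move=> m0; rewrite pnth //; have [H1 _] := TkP 1%N ltac:(lia).
    by have [_ _ /andP []] := Hform _ H1.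
  + move=> i Hi; rewrite !pnth //; last lia.
    have [H1 H2] := TkP i.+2 ltac:(lia).
    have [e _ J] := Hform _ H1.
    have Hin : ptile n (i.+2)%:Z (jj (Tk i.+2)) \in T by rewrite -{1}H2 -e.
    have [j' [J' Hin']] := TD_down HT Hin J ltac:(lia).
    have E : (i.+2)%:Z - 1 = (i.+1)%:Z by lia.
    rewrite E in Hin'.
    have := TkU _ Hin'; rewrite lev_ptile => ->.
    have -> : jj (ptile n (i.+1)%:Z j') = j' by rewrite /jj ptile_len addnn doubleK.
    by case/andP: J'.
- apply: uniq_perm; [by case: HT | exact: uniq_mkT | move=> x; apply/idP/idP].
  + move=> Hx; have [ex l1 _] := Hform x Hx.
    have xL : lev x \in map lev T by apply: map_f.
    have Hk : (1 <= lev x <= m)%N by rewrite -memL.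
    apply/mem_mkT; exists (lev x).-1; first by rewrite sp; lia.
    rewrite pnth; last lia.
    have E1 : (1 + (lev x).-1)%N = lev x by lia.
    have E2 : ((lev x).-1).+1 = lev x by lia.
    by rewrite E1 E2 TkU.
  + move/mem_mkT => [i Hi ->]; rewrite sp in Hi; rewrite pnth //.
    have [H1 H2] := TkP i.+1 ltac:(lia).
    have [e _ _] := Hform _ H1; rewrite H2 in e.
    by rewrite add1n -e.
Qed.

Fixpoint parts (t n : nat) {struct t} : seq (seq nat) :=
  if t is t'.+1 then
    (fix aux (m : nat) : seq (seq nat) :=
       if m is m'.+1 then aux m' ++ map (cons m) (parts t' m) else [:: [::]]) n
  else [:: [::]].

Lemma partsSS t n : parts t.+1 n.+1 = parts t.+1 n ++ map (cons n.+1) (parts t n.+1).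
Proof. by []. Qed.

Lemma mem_parts t n p : (p \in parts t n) = (size p <= t)%N && goodp n p.
Proof.
elim: t n p => [|t IHt] n p.
  by case: p => [|x p] //=; rewrite inE.
elim: n p => [|n IHn] p.
  by case: p => [|x p] //=; rewrite inE //= leqn0; case: x => //=; rewrite andbF.
rewrite partsSS mem_cat IHn; case: p => [|x p] //=.
case: (eqVneq x n.+1) => [->|Hx].
  rewrite mem_map; last by move=> ? ? [].
  rewrite IHt ltnS leqnn ltnn /=.
  by case: (size p <= t)%N; case: (goodp n.+1 p).
have -> : (x :: p \in map (cons n.+1) (parts t n.+1)) = false.
  by apply/negbTE/negP => /mapP [q _ [E _]]; move: Hx; rewrite E eqxx.
by rewrite orbF [(x <= n.+1)%N]leq_eqVlt (negbTE Hx) ltnS.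
Qed.

Lemma uniq_parts t n : uniq (parts t n).
Proof.
elim: t n => [|t IHt] n //; elim: n => [|n IHn] //.
rewrite partsSS cat_uniq IHn map_inj_uniq ?IHt ?andbT; last by move=> ? ? [].
apply/hasP => [[q /mapP [r _ ->]]]; rewrite mem_parts /= ltnn andbF //.
Qed.

Definition Fq t n : {poly int} := (\sum_(p <- parts t n) 'X^(sumn p))%R.

Lemma Fq_rec t n : Fq t.+1 n.+1 = Fq t.+1 n + 'X^(n.+1) * Fq t n.+1.
Proof.
rewrite /Fq partsSS big_cat big_map /=; congr (_ + _).
rewrite big_distrr; apply: eq_bigr => p _; by rewrite exprD.
Qed.

Lemma Fq_t0 t : Fq t 0 = 1.
Proof. by case: t => [|t]; rewrite /Fq /= big_seq1 expr0. Qed.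

Lemma Fq_0n n : Fq 0 n = 1.
Proof. by rewrite /Fq /= big_seq1 expr0. Qed.

Lemma qfactS m : qfact m.+1 = qfact m * qint m.+1.
Proof. by rewrite /qfact big_ord_recr. Qed.

Lemma qfact0 : qfact 0 = 1.
Proof. by rewrite /qfact big_ord0. Qed.

Lemma qintD a b : qint (a + b) = qint a + 'X^a * qint b.
Proof.
rewrite /qint big_split_ord; congr (_ + _).
rewrite big_distrr; apply: eq_bigr => i _; by rewrite exprD.
Qed.

Lemma Fq_id t n : Fq t n * qfact n * qfact t = qfact (n + t).
Proof.
elim: t n => [|t IHt] n.
  by rewrite Fq_0n qfact0 addn0 mul1r mulr1.
elim: n => [|n IHn].
  by rewrite Fq_t0 qfact0 !mul1r add0n.
have e2 := IHt n.+1; rewrite addSnnS in e2.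
have E : qfact (n.+1 + t.+1) = qfact (n + t.+1) * (qint n.+1 + 'X^(n.+1) * qint t.+1).
  by rewrite -qintD -qfactS addSn.
rewrite E mulrDr -{1}IHn -e2 Fq_rec !qfactS; ring.
Qed.

Lemma qint_neq0 m : qint m.+1 != 0.
Proof.
apply/negP => /eqP H; have := congr1 (fun p : {poly int} => p.[1]) H.
rewrite /qint horner_sum hornerC.
under eq_bigr do rewrite hornerXn expr1n.
rewrite sumr_const cardT size_enum_ord; move/eqP; rewrite pnatr_eq0. by [].
Qed.

Lemma qfact_neq0 m : qfact m != 0.
Proof. by rewrite /qfact; apply/prodf_neq0 => i _; apply: qint_neq0. Qed.

Lemma mkT_perm_inj n p1 p2 : perm_eq (mkT n 1 p1) (mkT n 1 p2) -> p1 = p2.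
Proof.
move=> P; have Hs := perm_size P; rewrite !size_mkT in Hs.
apply: (eq_from_nth (x0 := 0%N) Hs) => i Hi.
have H1 : ptile n (1 + i)%N%:Z (nth 0%N p1 i) \in mkT n 1 p1.
  by apply/mem_mkT; exists i.
rewrite (perm_mem P) in H1; have [i' Hi' E] := (mem_mkT _ _ _ _).1 H1.
have [E1 E2] := ptile_inj E.
have ei : i' = i by lia.
by rewrite E2 ei.
Qed.

Unset Implicit Arguments.

Theorem lemma3p8 (n a b t : nat) (mu : seq bool) :
  inL n a b mu ->
  passes_through (ptA a) mu (- (t%:Z), n%:Z + t%:Z) ->
  exists Ts : seq (seq tile),
    [/\ (forall T, T \in Ts -> is_TD n a mu T),
        (forall T, is_TD n a mu T -> exists2 T', T' \in Ts & perm_eq T T'),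
        pairwise (fun T1 T2 => ~~ perm_eq T1 T2) Ts &
        FracField.tofrac (\sum_(T <- Ts) 'X^(tnorm T) : {poly int}) = qbinom (n + t) n].
Proof.
move=> HL HP; have MB := mu_bound HL HP.
exists (map (mkT n 1) (parts t n)); split.
- move=> T /mapP [p Hp ->]; rewrite mem_parts in Hp.
  case/andP: Hp => Hs G; exact: mkT_TD MB Hs G.
- move=> T HT; have [p [Hs G Hperm]] := TD_part HL HP HT.
  exists (mkT n 1 p) => //; apply: map_f; by rewrite mem_parts Hs G.
- rewrite pairwise_map; have := uniq_parts t n; rewrite uniq_pairwise.
  apply: sub_pairwise => p1 p2 /= Hne; apply/negP => /mkT_perm_inj E.
  by rewrite E eqxx in Hne.
- rewrite big_map.
  under eq_bigr do rewrite tnorm_mkT.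
  rewrite -/(Fq t n) /qbinom addKn -(Fq_id t n) !rmorphM /= -(mulrA (FracField.tofrac (Fq t n))) mulfK //.
  by rewrite mulf_neq0 // tofrac_eq0 qfact_neq0.
Qed.
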